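(* For $k\in\mathbb{N}$ let $D(k)=\dfrac{1}{4}\cdot\dfrac{3^{2k+2}-9-40k-32k^{2}}{(2k+2)!}$. (i) For every $x\in(0,\pi/2)$ and every $n\in\mathbb{N}$, $$2+\frac{1}{\cos x}\sum_{k=2}^{2n+1}(-1)^{k}D(k)\,x^{2k}<\Big(\frac{\sin x}{x}\Big)^{2}+\frac{\tan x}{x}<2+\frac{1}{\cos x}\sum_{k=2}^{2n}(-1)^{k}D(k)\,x^{2k}.$$ (ii) For every $x\in(0,\pi/2)$ and every integer $m\ge 2$, $$\Big|\Big(\frac{\sin x}{x}\Big)^{2}+\frac{\tan x}{x}-\Big(2+\frac{1}{\cos x}\sum_{k=2}^{m}(-1)^{k}D(k)\,x^{2k}\Big)\Big|<D(m+1)\,\frac{x^{2m+2}}{\cos x}.$$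
   Context: $\mathbb{N}=\{1,2,3,\dots\}$. *)

(* Defs.v *)
From Stdlib Require Import Arith Reals Lra Lia.
Open Scope R_scope.

Definition D (k : nat) : R :=
  / 4 * ((3 ^ (2 * k + 2) - 9 - 40 * INR k - 32 * (INR k) ^ 2)
         / INR (fact (2 * k + 2))).

Definition term (x : R) (k : nat) : R := (-1) ^ k * D k * x ^ (2 * k).

Fixpoint Psum (x : R) (N : nat) : R :=
  match N with
  | O => 0
  | S N' => Psum x N' + (if (2 <=? N)%nat then term x N else 0)
  end.

Definition F (x : R) : R := (sin x / x) ^ 2 + tan x / x.

Definition approx (x : R) (N : nat) : R := 2 + / cos x * Psum x N.

(* Main.v *)
From Stdlib Require Import Reals Lra Lia.
From Coquelicot Require Import Coquelicot.
Require Import Defs.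
Open Scope R_scope.

Lemma cos_ser y : is_series (fun j => cos_n j * (y*y)^j) (cos y).
Proof. unfold cos. destruct (exist_cos (Rsqr y)) as [l H]. apply is_series_Reals. exact H. Qed.

Lemma sin_ser y : y <> 0 -> is_series (fun j => sin_n j * (y*y)^j) (sin y / y).
Proof. intro hy. unfold sin. destruct (exist_sin (Rsqr y)) as [l H].
  replace (y*l/y) with l by (field; auto). apply is_series_Reals. exact H. Qed.

Lemma ser_plus a b la lb : is_series a la -> is_series b lb -> is_series (fun n => a n + b n) (la+lb).
Proof. intros; exact (is_series_plus a b la lb H H0). Qed.
Lemma ser_minus a b la lb : is_series a la -> is_series b lb -> is_series (fun n => a n - b n) (la-lb).
Proof. intros; exact (is_series_minus a b la lb H H0). Qed.
Lemma ser_shift1 (a : nat -> R) (l : R) : is_series a l -> is_series (fun k => a (S k)) (l - a O).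
Proof. intros. apply is_series_incr_1.
  change (plus (l - a O) (a O)) with (Rplus (l - a O) (a O)).
  replace (Rplus (l - a O) (a O)) with l by ring. exact H. Qed.

Lemma term_id x k : x <> 0 ->
  (cos_n (S k) * (x*x)^(S k) - cos_n (S k) * ((3*x)*(3*x))^(S k)) * / (4*(x*x))
  + sin_n k * (x*x)^k - 2 * (cos_n k * (x*x)^k) = (-1)^k * D k * x^(2*k).
Proof.
  intro hx.
  assert (E3 : forall n, (x*x)^n = x^(2*n)) by (intro n; rewrite pow_mult; f_equal; ring).
  assert (E1 : (x*x)^(S k) = x^(2*k) * x^2) by (rewrite E3; replace (2*S k)%nat with (2*k+2)%nat by lia; apply pow_add).
  assert (E2 : ((3*x)*(3*x))^(S k) = 9^k * 9 * (x^(2*k) * x^2)).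
  { replace ((3*x)*(3*x)) with (9*(x*x)) by ring. rewrite Rpow_mult_distr, E1. simpl. ring. }
  assert (E4 : 3^(2*k+2) = 9^k*9).
  { rewrite pow_add, pow_mult. replace (3^2) with 9 by ring. ring. }
  assert (E5 : (-1)^(S k) = - (-1)^k) by (simpl; ring).
  unfold cos_n, sin_n, D. rewrite E1, E2, E3, E4, E5.
  replace (2*S k)%nat with (S (S (2*k))) by lia.
  replace (2*k+1)%nat with (S (2*k)) by lia.
  replace (2*k+2)%nat with (S (S (2*k))) by lia.
  rewrite !fact_simpl, !mult_INR, !S_INR, mult_INR.
  assert (INR (Factorial.fact (2*k)) <> 0) by (apply not_0_INR; apply Factorial.fact_neq_0).
  assert (0 <= INR k) by apply pos_INR.
  simpl INR.
  field; repeat split; try lra; auto.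
Qed.

Definition G (x : R) := (cos x - cos (3*x)) / (4*(x*x)) + sin x / x - 2 * cos x.

Lemma G_ser x : x <> 0 -> is_series (fun k => (-1)^k * D k * x^(2*k)) (G x).
Proof.
  intro hx.
  pose proof (ser_shift1 _ _ (cos_ser x)) as A1.
  pose proof (ser_shift1 _ _ (cos_ser (3*x))) as B1.
  pose proof (is_series_scal_r (/(4*(x*x))) _ _ (ser_minus _ _ _ _ A1 B1)) as AB.
  pose proof (ser_minus _ _ _ _ (ser_plus _ _ _ _ AB (sin_ser x hx)) (is_series_scal_r 2 _ _ (cos_ser x))) as T.
  cbv beta in T.
  replace (G x) with ((cos x - (cos_n 0 * (x*x)^0) - (cos (3 * x) - cos_n 0 * (3*x*(3*x))^0)) * / (4 * (x * x)) + sin x / x - cos x * 2).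
  2:{ unfold G, cos_n. simpl. field. lra. }
  eapply is_series_ext. 2: exact T.
  intro k. cbv beta. rewrite <- (term_id x k hx). rewrite (Rmult_comm 2). reflexivity.
Qed.

Lemma G_eq x : x <> 0 -> cos x <> 0 -> G x = cos x * F x - 2 * cos x.
Proof.
  intros hx hc.
  assert (H3 : cos (3*x) = cos x - 4 * cos x * sin x ^ 2).
  { replace (3*x) with (2*x + x) by ring. rewrite cos_plus, sin_2a, cos_2a.
    pose proof (sin2_cos2 x) as S. unfold Rsqr in S. nra. }
  unfold G, F, tan. rewrite H3. field. auto.
Qed.

Lemma Nb j : 3 * 3^(2*(j+2)+2) - 27 - 376 * INR (j+2) - 352 * INR (j+2) ^ 2 >= 0.
Proof.
  induction j.
  - simpl. lra.
  - replace (2*(S j+2)+2)%nat with (S (S (2*(j+2)+2))) by lia.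
    rewrite <- !tech_pow_Rmult.
    replace (INR (S j + 2)) with (INR (j+2) + 1) by (rewrite <- S_INR; f_equal; lia).
    assert (2 <= INR (j+2)) by (replace 2 with (INR 2) by reflexivity; apply le_INR; lia).
    nra.
Qed.

Lemma D_step k x : x*x < 4 -> D (k+3) * (x*x) < D (k+2) /\ 0 < D (k+2).
Proof.
  intro hx.
  pose proof (Nb k) as HN.
  unfold D.
  set (T := 3^(2*(k+2)+2)) in *.
  assert (ET : 3^(2*(k+3)+2) = 9*T).
  { unfold T. replace (2*(k+3)+2)%nat with (S (S (2*(k+2)+2))) by lia.
    rewrite <- !tech_pow_Rmult. ring. }
  rewrite ET.
  replace (2*(k+3)+2)%nat with (S (S (2*(k+2)+2))) by lia.
  rewrite !fact_simpl, !mult_INR.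
  set (f := INR (Factorial.fact (2 * (k + 2) + 2))).
  assert (fpos : 0 < f) by (apply lt_0_INR; apply Nat.lt_0_succ || apply Factorial.lt_O_fact).
  replace (INR (k+3)) with (INR (k+2) + 1) by (rewrite <- S_INR; f_equal; lia).
  rewrite !S_INR. assert (E: forall m, INR (2*m+2) = 2*INR m + 2) by (intro m; rewrite plus_INR, mult_INR; simpl; ring). rewrite E.
  set (y := INR (k+2)) in *.
  assert (hy : 2 <= y) by (unfold y; replace 2 with (INR 2) by reflexivity; apply le_INR; lia).
  simpl INR.
  set (Nk := T - 9 - 40*y - 32*y^2).
  assert (Nkpos : 0 < Nk) by (unfold Nk; nra).
  set (Nk1 := 9*T - 9 - 40*(y+1) - 32*(y+1)^2).
  assert (R12 : Nk1 <= 12 * Nk) by (unfold Nk1, Nk; nra).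
  split.
  - set (A := (2 * y + 2 + 1 + 1) * (2 * y + 2 + 1)).
    assert (HA : 56 <= A) by (unfold A; nra).
    replace (/ 4 * (Nk1 / ((2 * y + 2 + 1 + 1) * ((2 * y + 2 + 1) * f))) * (x * x))
      with ((Nk1 * (x*x) / A) * / (4*f)) by (unfold A; field; repeat split; lra).
    replace (/ 4 * (Nk / f)) with (Nk * / (4*f)) by (field; lra).
    apply Rmult_lt_compat_r. apply Rinv_0_lt_compat; lra.
    apply Rmult_lt_reg_r with A; [lra|]. unfold Rdiv. rewrite Rmult_assoc, Rinv_l, Rmult_1_r by lra.
    assert (0 <= x*x) by nra.
    assert (Nk1 * (x*x) <= 12 * Nk * (x*x)) by nra.
    nra.
  - apply Rmult_lt_0_compat. lra. apply Rdiv_lt_0_compat; auto.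
Qed.

Definition aseq x k := D (k+2) * x^(2*(k+2)).

Lemma Psum_shift x N : Psum x (N+2) = sum_f_R0 (tg_alt (aseq x)) N.
Proof.
  assert (Et : forall k, term x (k+2) = tg_alt (aseq x) k).
  { intro k. unfold term, tg_alt, aseq. rewrite pow_add. simpl. ring. }
  induction N.
  - simpl. rewrite <- Et. simpl. ring.
  - replace (S N + 2)%nat with (S (N+2)) by lia.
    change (Psum x (S (N+2))) with (Psum x (N+2) + (if (2 <=? S (N+2))%nat then term x (S (N+2)) else 0)).
    replace ((2 <=? S (N+2))%nat) with true by (symmetry; apply Nat.leb_le; lia).
    rewrite IHN, tech5, <- (Et (S N)). replace (S N + 2)%nat with (S (N+2)) by lia. reflexivity.
Qed.

Lemma D01 : D 0 = 0 /\ D 1 = 0.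
Proof. unfold D; simpl; split; field. Qed.

Lemma alt_props x : 0 < x < PI/2 ->
  (forall k, 0 < aseq x k) /\ (forall k, aseq x (S k) < aseq x k) /\
  Un_cv (fun N => sum_f_R0 (tg_alt (aseq x)) N) (G x) /\ Un_cv (aseq x) 0.
Proof.
  intro hx. pose proof PI_4.
  assert (hx4 : x*x < 4) by nra.
  assert (apos : forall k, 0 < aseq x k).
  { intro k. unfold aseq. apply Rmult_lt_0_compat. apply (D_step k x hx4). apply pow_lt; lra. }
  assert (ser : is_series (tg_alt (aseq x)) (G x)).
  { pose proof (G_ser x ltac:(lra)) as H0.
    pose proof (is_series_incr_n (fun k : nat => (-1) ^ k * D k * x ^ (2 * k)) 2 (G x) ltac:(lia)) as K.
    cbv beta in K. change (Init.Nat.pred 2) with 1%nat in K.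
    match type of K with ?P -> _ => assert (K1 : P) end.
    { match goal with |- is_series _ ?l => replace l with (G x) end. exact H0.
      rewrite sum_Sn, sum_O. cbv beta. destruct D01 as [E0 E1]. rewrite E0, E1.
      change (G x = Rplus (G x) (Rplus ((-1)^0*0*x^(2*0)) ((-1)^1*0*x^(2*1)))). ring. }
    specialize (K K1).
    eapply is_series_ext. 2: exact K.
    intro k. cbv beta. unfold tg_alt, aseq. rewrite (Nat.add_comm k 2), pow_add. simpl. ring. }
  split; [exact apos|]. split.
  - intro k. unfold aseq.
    replace (S k + 2)%nat with (k+3)%nat by lia.
    replace (2*(k+3))%nat with (2*(k+2)+2)%nat by lia.
    rewrite pow_add.
    replace (D (k + 3) * (x ^ (2 * (k + 2)) * x ^ 2)) with ((D (k+3) * (x*x)) * x ^ (2 * (k + 2))) by ring.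
    apply Rmult_lt_compat_r. apply pow_lt; lra. apply (D_step k x hx4).
  - split.
    + apply is_series_Reals in ser. exact ser.
    + assert (L : is_lim_seq (tg_alt (aseq x)) 0) by (apply ex_series_lim_0; exists (G x); exact ser).
      apply is_lim_seq_abs in L. simpl in L. rewrite Rabs_R0 in L.
      apply is_lim_seq_Reals.
      eapply is_lim_seq_ext. 2: exact L.
      intro n. unfold tg_alt. rewrite Rabs_mult, pow_1_abs, Rmult_1_l. apply Rabs_pos_eq. left; apply apos.
Qed.

Lemma key x p : 0 < x < PI/2 ->
  sum_f_R0 (tg_alt (aseq x)) (S (2*p)) < G x < sum_f_R0 (tg_alt (aseq x)) (2*p).
Proof.
  intro hx. destruct (alt_props x hx) as [apos [adec [cv cv0]]].
  destruct (alternated_series_ineq (aseq x) (G x) (S p) (fun n => Rlt_le _ _ (adec n)) cv0 cv) as [L U].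
  replace (2 * S p)%nat with (S (S (2*p))) in L, U by lia.
  rewrite !tech5 in L, U.
  assert (T1 : tg_alt (aseq x) (S (2*p)) = - aseq x (S (2*p))) by (unfold tg_alt; rewrite pow_1_odd; ring).
  assert (T2 : tg_alt (aseq x) (S (S (2*p))) = aseq x (S (S (2*p)))).
  { unfold tg_alt. replace (S (S (2*p))) with (2 * S p)%nat by lia. rewrite pow_1_even; ring. }
  assert (T3 : tg_alt (aseq x) (S (S (S (2*p)))) = - aseq x (S (S (S (2*p))))).
  { unfold tg_alt. replace (S (S (S (2*p)))) with (S (2 * S p))%nat by lia. rewrite pow_1_odd; ring. }
  rewrite T1, T2, T3 in *.
  pose proof (adec (S (2*p))). pose proof (adec (S (S (2*p)))).
  lra.
Qed.

Lemma HF x : 0 < x < PI/2 -> 0 < cos x /\ F x = 2 + / cos x * G x.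
Proof.
  intro hx. pose proof PI_RGT_0.
  assert (hc : 0 < cos x) by (apply cos_gt_0; lra).
  split; auto. rewrite G_eq by lra. field. lra.
Qed.

Theorem theorem4 :
  (forall (x : R) (n : nat), 0 < x < PI / 2 -> (1 <= n)%nat ->
     approx x (2 * n + 1) < F x < approx x (2 * n)) /\
  (forall (x : R) (m : nat), 0 < x < PI / 2 -> (2 <= m)%nat ->
     Rabs (F x - approx x m) < D (m + 1) * x ^ (2 * m + 2) / cos x).
Proof.
  split.
  - intros x n hx hn. destruct n as [|p]; [lia|].
    destruct (HF x hx) as [hc ->]. unfold approx.
    replace (2 * S p + 1)%nat with (S (2*p) + 2)%nat by lia.
    replace (2 * S p)%nat with (2*p + 2)%nat by lia.
    rewrite !Psum_shift.
    destruct (key x p hx) as [L U].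
    assert (0 < / cos x) by (apply Rinv_0_lt_compat; auto).
    split; apply Rplus_lt_compat_l; apply Rmult_lt_compat_l; auto.
  - intros x m hx hm.
    destruct (HF x hx) as [hc ->]. unfold approx.
    replace m with ((m-2)+2)%nat by lia. set (q := (m-2)%nat).
    rewrite Psum_shift.
    assert (hi : 0 < / cos x) by (apply Rinv_0_lt_compat; auto).
    replace (2 + / cos x * G x - (2 + / cos x * sum_f_R0 (tg_alt (aseq x)) q))
      with (/ cos x * (G x - sum_f_R0 (tg_alt (aseq x)) q)) by ring.
    replace (D (q + 2 + 1) * x ^ (2 * (q + 2) + 2) / cos x) with (/ cos x * aseq x (S q)).
    2:{ unfold aseq. replace (S q + 2)%nat with (q+2+1)%nat by lia.
        replace (2 * (q + 2 + 1))%nat with (2 * (q + 2) + 2)%nat by lia. field. lra. }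
    rewrite Rabs_mult, (Rabs_pos_eq (/ cos x)) by lra.
    apply Rmult_lt_compat_l; auto.
    destruct (alt_props x hx) as [apos _].
    destruct (Nat.Even_or_Odd q) as [[p Hp]|[p Hp]]; rewrite Hp.
    + destruct (key x p hx) as [L U]. rewrite tech5 in L.
      assert (T1 : tg_alt (aseq x) (S (2*p)) = - aseq x (S (2*p))) by (unfold tg_alt; rewrite pow_1_odd; ring).
      rewrite T1 in L. apply Rabs_def1; lra.
    + destruct (key x p hx) as [L _]. destruct (key x (S p) hx) as [_ U].
      replace (2 * S p)%nat with (S (2*p+1)) in U by lia.
      replace (S (2*p)) with (2*p+1)%nat in L by lia.
      rewrite tech5 in U.
      assert (T1 : tg_alt (aseq x) (S (2*p+1)) = aseq x (S (2*p+1))).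
      { unfold tg_alt. replace (S (2*p+1)) with (2 * S p)%nat by lia. rewrite pow_1_even; ring. }
      rewrite T1 in U. pose proof (apos (S (2*p+1))). apply Rabs_def1; lra.
Qed.
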